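(* Let $X$ be a finite discrete space with at least two elements, $\Gamma$ a nonempty countable set, $d$ a compatible metric on $X^\Gamma$ (product topology), $\mathcal F$ the unique compatible uniformity on $X^\Gamma$, and $f:X^\Gamma\to X^\Gamma$ a map. For $x,y\in X^\Gamma$: (I) the following are equivalent: (1) there is $s>0$ with $F_{xy}(s)=0$; (2) there is $\alpha\in\mathcal F$ with $G_{xy}(\alpha)=0$; (3) there is a finite $D\subseteq\Gamma$ with $G_{xy}(\gamma_D)=0$. (II) The following are equivalent: (4) there is $s>0$ with $F_{xy}(s)<1$; (5) there is $\alpha\in\mathcal F$ with $G_{xy}(\alpha)<1$; (6) there is a finite $D\subseteq\Gamma$ with $G_{xy}(\gamma_D)<1$. (III) The following are equivalent: (7) $F^*_{xy}(s)=1$ for all $s>0$; (8) $G^*_{xy}(\alpha)=1$ for all $\alpha\in\mathcal F$; (9) $G^*_{xy}(\gamma_D)=1$ for every finite $D\subseteq\Gamma$.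
   Context: For $D\subseteq\Gamma$, $\gamma_D=\{((x_\alpha),(y_\alpha))\in X^\Gamma\times X^\Gamma:x_\alpha=y_\alpha\ \forall\alpha\in D\}$. The uniformity $\mathcal F$ consists of all $B\subseteq X^\Gamma\times X^\Gamma$ containing $\gamma_D$ for some finite $D\subseteq\Gamma$; equivalently, all $B$ containing $\{(x,y):d(x,y)<\varepsilon\}$ for some $\varepsilon>0$. For $\alpha\in\mathcal F$, $n\ge1$: $\zeta(x,y,\alpha,n)=\#\{i\in\{0,\dots,n-1\}:(f^i(x),f^i(y))\in\alpha\}$, $G_{xy}(\alpha)=\liminf_n\zeta(x,y,\alpha,n)/n$, $G^*_{xy}(\alpha)=\limsup_n\zeta(x,y,\alpha,n)/n$. Also $\xi(x,y,t,n)=\#\{i\in\{0,\dots,n-1\}:d(f^i(x),f^i(y))<t\}$, $F_{xy}(t)=\liminf_n\xi(x,y,t,n)/n$, $F^*_{xy}(t)=\limsup_n\xi(x,y,t,n)/n$. *)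

(* Defs.v *)
From mathcomp Require Import all_boot all_order all_algebra.
From mathcomp Require Import all_classical all_reals all_analysis.
Set Implicit Arguments. Unset Strict Implicit. Unset Printing Implicit Defensive.
Import Order.TTheory GRing.Theory Num.Theory.
Local Open Scope classical_set_scope.
Local Open Scope ring_scope.

Section Defs.
Variables (Gam : Type) (X : finType).
Notation T := (Gam -> X).

Definition gammaD (D : set Gam) : set (T * T) :=
  [set p | forall a, D a -> p.1 a = p.2 a].

Definition unifF : set (set (T * T)) :=
  [set B | exists D : set Gam, finite_set D /\ gammaD D `<=` B].

Definition cyl (x : T) (D : set Gam) : set T := [set y | forall a, D a -> y a = x a].

Variable R : realType.

Definition is_metric (d : T -> T -> R) : Prop :=
  [/\ (forall x y, 0 <= d x y),
      (forall x y, d x y = 0 <-> x = y),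
      (forall x y, d x y = d y x) &
      (forall x y z, d x z <= d x y + d y z)].

(* d induces the product topology (X discrete): at every point, metric balls
   and cylinders over finite sets of coordinates form equivalent
   neighbourhood bases *)
Definition compatible_metric (d : T -> T -> R) : Prop :=
  is_metric d /\
  forall x : T,
    (forall e : R, 0 < e -> exists D, finite_set D /\
         cyl x D `<=` [set y | d x y < e]) /\
    (forall D, finite_set D -> exists e : R, 0 < e /\
         [set y | d x y < e] `<=` cyl x D).

Variable f : T -> T.

Definition zeta (x y : T) (al : set (T * T)) (n : nat) : nat :=
  #|[set i : 'I_n | `[< al (iter i f x, iter i f y) >] ]|.

Definition xi (d : T -> T -> R) (x y : T) (t : R) (n : nat) : nat :=
  #|[set i : 'I_n | d (iter i f x) (iter i f y) < t]|.

(* sequences of ratios, indexed so that term k corresponds to n = k+1 *)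
Definition Gseq x y al : R^nat := fun k => (zeta x y al k.+1)%:R / (k.+1)%:R.
Definition Fseq d x y t : R^nat := fun k => (xi d x y t k.+1)%:R / (k.+1)%:R.

Definition G x y al : R := limn_inf (Gseq x y al).
Definition Gstar x y al : R := limn_sup (Gseq x y al).
Definition Fl d x y t : R := limn_inf (Fseq d x y t).
Definition Fstar d x y t : R := limn_sup (Fseq d x y t).
End Defs.

(* Main.v *)
Require Import Defs.
From mathcomp Require Import all_boot all_order all_algebra.
From mathcomp Require Import all_classical all_reals all_analysis.
From mathcomp Require Import finmap.
Import Order.TTheory GRing.Theory Num.Theory.
Local Open Scope classical_set_scope.
Local Open Scope ring_scope.
Section Lim.
Variable R : realType.
Implicit Types u v : R^o^nat.
Definition in01 (u : R^nat) := forall n, 0 <= u n <= 1.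

Lemma sdrop_ne u n : sdrop u n !=set0.
Proof. by exists (u n); exists n => /=. Qed.

Lemma infs01 u n : in01 u -> 0 <= infs u n <= 1.
Proof.
move=> h; rewrite /infs /=; apply/andP; split.
  apply: lb_le_inf; first exact: sdrop_ne.
  by move=> _ [m _ <-]; case/andP: (h m).
have hl : has_lbound (sdrop u n) by exists 0 => _ [m _ <-]; case/andP: (h m).
apply: le_trans (ge_inf hl _) _; first by exists n => /=.
by case/andP: (h n).
Qed.

Lemma sups01 u n : in01 u -> 0 <= sups u n <= 1.
Proof.
move=> h; rewrite /sups /=; apply/andP; split; last first.
  apply: ge_sup; first exact: sdrop_ne.
  by move=> _ [m _ <-]; case/andP: (h m).
have hl : has_ubound (sdrop u n) by exists 1 => _ [m _ <-]; case/andP: (h m).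
apply: le_trans _ (ub_le_sup hl _); last by exists n => /=.
by case/andP: (h n).
Qed.

Lemma infs_le u v n : in01 u -> in01 v -> (forall k, u k <= v k) -> infs u n <= infs v n.
Proof.
move=> hu hv huv; rewrite /infs /=.
apply: lb_le_inf; first exact: sdrop_ne.
have hl : has_lbound (sdrop u n) by exists 0 => _ [m _ <-]; case/andP: (hu m).
move=> _ [m /= nm <-]; apply: le_trans _ (huv m).
by apply: (ge_inf hl); exists m.
Qed.

Lemma sups_le u v n : in01 u -> in01 v -> (forall k, u k <= v k) -> sups u n <= sups v n.
Proof.
move=> hu hv huv; rewrite /sups /=.
apply: ge_sup; first exact: sdrop_ne.
have hl : has_ubound (sdrop v n) by exists 1 => _ [m _ <-]; case/andP: (hv m).
move=> _ [m /= nm <-]; apply: le_trans (huv m) _.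
by apply: (ub_le_sup hl); exists m.
Qed.

Lemma cvg_infs01 u : in01 u -> cvgn (infs u).
Proof.
move=> h; apply: nondecreasing_is_cvgn.
  by apply: nondecreasing_infs; exists 0 => _ [m _ <-]; case/andP: (h m).
by exists 1 => _ [m _ <-]; case/andP: (infs01 u m h).
Qed.

Lemma cvg_sups01 u : in01 u -> cvgn (sups u : R^o^nat).
Proof.
move=> h; apply: nonincreasing_is_cvgn.
  by apply: nonincreasing_sups; exists 1 => _ [m _ <-]; case/andP: (h m).
by exists 0 => _ [m _ <-]; case/andP: (sups01 u m h).
Qed.

Lemma liminf_le u v : in01 u -> in01 v -> (forall k, u k <= v k) -> limn_inf u <= limn_inf v.
Proof.
move=> hu hv huv; apply: ler_lim; [exact: cvg_infs01|exact: cvg_infs01|].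
by apply: nearW => n; apply: infs_le.
Qed.

Lemma limsup_le u v : in01 u -> in01 v -> (forall k, u k <= v k) -> limn_sup u <= limn_sup v.
Proof.
move=> hu hv huv; apply: ler_lim; [exact: cvg_sups01|exact: cvg_sups01|].
by apply: nearW => n; apply: sups_le.
Qed.

Lemma liminf_ge0 u : in01 u -> 0 <= limn_inf u.
Proof.
move=> hu; apply: limr_ge; first exact: cvg_infs01.
by apply: nearW => n; case/andP: (infs01 u n hu).
Qed.

Lemma limsup_le1 u : in01 u -> limn_sup u <= 1.
Proof.
move=> hu; apply: limr_le; first exact: cvg_sups01.
by apply: nearW => n; case/andP: (sups01 u n hu).
Qed.
End Lim.
Arguments in01 {R} u.
Definition io (P : nat -> Prop) := forall N, exists n, (N <= n)%N /\ P n.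

Lemma io_pigeon (X : finType) (P : nat -> Prop) (hh : nat -> X) :
  io P -> exists v, io (fun n => P n /\ hh n = v).
Proof.
move=> hP.
suff: forall s : seq X, io (fun n => P n /\ hh n \in s) ->
   exists v, io (fun n => P n /\ hh n = v).
  move=> H; apply: (H (enum X)) => N; have [n [Nn Pn]] := hP N; by exists n; rewrite mem_enum.
elim=> [|v s IH] H.
  by have [n [_ []]] := H 0%N; rewrite in_nil.
case: (pselect (io (fun n => P n /\ hh n = v))) => [|nv]; first by exists v.
apply: IH => N.
have [N0 HN0] : exists N0, forall n, (N0 <= n)%N -> ~ (P n /\ hh n = v).
  apply: contrapT => hc; apply: nv => M.
  apply: contrapT => hM; apply: hc; exists M => n Mn Pn; apply: hM; by exists n.
have [n [Nn [Pn hn]]] := H (maxn N N0).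
exists n; split; first by apply: leq_trans Nn; apply: leq_maxl.
split => //; move: hn; rewrite in_cons => /orP[/eqP e|//].
by exfalso; apply: (HN0 n) => //; apply: leq_trans Nn; apply: leq_maxr.
Qed.

Section Cluster.
Variables (Gam : Type) (X : finType) (hg : Gam -> nat)
  (hinj : forall a b, hg a = hg b -> a = b) (a : nat -> Gam -> X).

Definition gopt (k : nat) : option Gam :=
  match pselect (exists g, hg g = k) with
  | left p => Some (proj1_sig (cid p))
  | right _ => None end.

Lemma goptE g : gopt (hg g) = Some g.
Proof.
rewrite /gopt; case: pselect => [p|np]; last by exfalso; apply: np; exists g.
by case: (cid p) => g' /= /hinj ->.
Qed.

Definition vsel (S : nat -> Prop) (g : Gam) : X :=
  match pselect (exists v, io (fun n => S n /\ a n g = v)) with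
  | left p => proj1_sig (cid p)
  | right _ => a 0%N g end.

Lemma vselP S g : io S -> io (fun n => S n /\ a n g = vsel S g).
Proof.
move=> hS; rewrite /vsel; case: pselect => [p|np].
  by case: (cid p).
by exfalso; apply: np; exact: (@io_pigeon X S (fun n => a n g) hS).
Qed.

Fixpoint Sk (k : nat) : nat -> Prop :=
  match k with
  | 0 => fun _ => True
  | k'.+1 => fun n => Sk k' n /\
      match gopt k' with Some g => a n g = vsel (Sk k') g | None => True end
  end.

Lemma Sk_io k : io (Sk k).
Proof.
elim: k => [|k IH] /=; first by move=> N; exists N.
case: (gopt k) => [g|].
  exact: (vselP (Sk k) g IH).
by move=> N; have [n [? ?]] := IH N; exists n.
Qed.

Lemma Sk_mono k k' n : (k <= k')%N -> Sk k' n -> Sk k n.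
Proof.
move=> /subnKC <-; elim: (k' - k)%N => [|m IH]; first by rewrite addn0.
by rewrite addnS => /= [[/IH]].
Qed.

Definition zc : Gam -> X := fun g => vsel (Sk (hg g)) g.

Lemma Sk_coord g n : Sk (hg g).+1 n -> a n g = zc g.
Proof. by move=> /= [_]; rewrite goptE. Qed.

Lemma cluster (D : set Gam) K : (forall g, D g -> (hg g < K)%N) ->
  io (fun n => forall g, D g -> a n g = zc g).
Proof.
move=> hK N; have [n [Nn Sn]] := Sk_io K N; exists n; split => // g Dg.
by apply: Sk_coord; apply: Sk_mono Sn; apply: hK.
Qed.
End Cluster.

Lemma finite_bound (Gam : Type) (hg : Gam -> nat) (D : set Gam) :
  finite_set D -> exists K, forall g, D g -> (hg g < K)%N.
Proof.
move=> /(finite_image hg) /finite_fsetP [F hF].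
exists (\max_(k <- enum_fset F) k).+1 => g Dg; rewrite ltnS.
have hin : (hg g) \in F.
  have : (hg @` D) (hg g) by exists g.
  by rewrite hF.
exact: (@leq_bigmax_seq _ (enum_fset F) xpredT id (hg g) hin).


Qed.

Section Unif.
Variables (R : realType) (Gam : Type) (X : finType) (hg : Gam -> nat)
  (hinj : forall a b, hg a = hg b -> a = b)
  (d : (Gam -> X) -> (Gam -> X) -> R) (hd : compatible_metric d).

Lemma unifU2 (D : set Gam) : finite_set D ->
  exists e : R, 0 < e /\ forall a b, d a b < e -> gammaD D (a, b).
Proof.
move=> fD; apply: contrapT => hn.
have H : forall n : nat, exists p : (Gam -> X) * (Gam -> X),
    d p.1 p.2 < n.+1%:R^-1 /\ ~ gammaD D p.
  move=> n; apply: contrapT => hc; apply: hn; exists n.+1%:R^-1.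
  split; first by rewrite invr_gt0 ltr0Sn.
  move=> a b hab; apply: contrapT => hgD; apply: hc; by exists (a, b).
have [P HP] := choice H.
pose A n := (P n).1; pose B n := (P n).2.
pose z := zc Gam X hg A.
have [[_ _ dsym dtri] hloc] := hd.
have [h1 h2] := hloc z.
have [ez [ez0 hez]] := h2 D fD.
have ez20 : 0 < ez / 2 by rewrite divr_gt0.
have [D' [fD' hD']] := h1 (ez / 2) ez20.
have [K hK] := @finite_bound _ hg _ fD'.
have [N _ HN] := near_infty_natSinv_lt (PosNum ez20).
have [n [Nn hcl]] := @cluster _ _ hg hinj A _ _ hK N.
have hNn : n.+1%:R^-1 < ez / 2 := HN n Nn.
have dA : d z (A n) < ez / 2 by apply: hD' => g Dg; apply: hcl.
have dB : d z (B n) < ez.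
  apply: le_lt_trans (dtri z (A n) (B n)) _.
  rewrite [ez](splitr ez); apply: ltrD => //.
  by apply: lt_trans hNn; case: (HP n).
have dA' : d z (A n) < ez.
  by apply: lt_trans dA _; rewrite ltr_pdivrMr // ltr_pMr // ltr1n.
have cA := hez (A n) dA'.
have cB := hez (B n) dB.
case: (HP n) => _; apply => g Dg /=.
by rewrite -/(A n) -/(B n) cA // cB.
Qed.

Lemma unifU1 (e : R) : 0 < e ->
  exists D, finite_set D /\ forall a b, gammaD D (a, b) -> d a b < e.
Proof.
move=> e0; apply: contrapT => hn.
have H : forall n : nat, exists p : (Gam -> X) * (Gam -> X),
    gammaD [set g | (hg g < n)%N] p /\ e <= d p.1 p.2.
  move=> n; apply: contrapT => hc; apply: hn; exists [set g | (hg g < n)%N].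
  split.
    apply: (finite_preimage (B := `I_n)); last exact: finite_II.
    by move=> u v _ _; apply: hinj.
  move=> a b hab; apply: contrapT => hgD; apply: hc; exists (a, b); split => //.
  by rewrite leNgt; apply/negP.
have [P HP] := choice H.
pose A n := (P n).1; pose B n := (P n).2.
pose z := zc Gam X hg A.
have [[_ _ dsym dtri] hloc] := hd.
have [h1 h2] := hloc z.
have e20 : 0 < e / 2 by rewrite divr_gt0.
have [D' [fD' hD']] := h1 (e / 2) e20.
have [K hK] := @finite_bound _ hg _ fD'.
have [n [Kn hcl]] := @cluster _ _ hg hinj A _ _ hK K.
have dA : d z (A n) < e / 2 by apply: hD' => g Dg; apply: hcl.
have dB : d z (B n) < e / 2.
  apply: hD' => g Dg; transitivity (A n g); last exact: hcl; symmetry.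
  case: (HP n) => + _; apply => /=.
  by apply: leq_trans (hK g Dg) Kn.
case: (HP n) => _; rewrite leNgt => /negP; apply.
apply: le_lt_trans (dtri _ z _) _.
by rewrite dsym [e](splitr e); apply: ltrD.
Qed.
End Unif.

Lemma ratio01 (R : realType) (m n : nat) : (m <= n.+1)%N -> 0 <= (m%:R / n.+1%:R : R) <= 1.
Proof.
move=> h; apply/andP; split; first by rewrite divr_ge0.
by rewrite ler_pdivrMr ?ltr0Sn // mul1r ler_nat.
Qed.

Lemma ratio_le (R : realType) n (P Q : 'I_n.+1 -> bool) : (forall i, P i -> Q i) ->
  #|[set i | P i]|%:R / n.+1%:R <= #|[set i | Q i]|%:R / n.+1%:R :> R.
Proof.
move=> hPQ; apply: ler_wpM2r; first by rewrite invr_ge0.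
rewrite ler_nat; apply: subset_leq_card; apply/fintype.subsetP => i.
by rewrite !in_setE; apply: hPQ.
Qed.

Lemma card_le_n n (P : 'I_n.+1 -> bool) : (#|[set i | P i]| <= n.+1)%N.
Proof. by apply: leq_trans (max_card _) _; rewrite card_ord. Qed.

Section Main.
Variables (R : realType) (X : finType) (Gam : Type) (f : (Gam -> X) -> (Gam -> X))
  (d : (Gam -> X) -> (Gam -> X) -> R) (x y : Gam -> X).

Lemma G01 al : in01 (Gseq R f x y al).
Proof. by move=> k; apply: ratio01; apply: card_le_n. Qed.

Lemma F01 t : in01 (Fseq f d x y t).
Proof. by move=> k; apply: ratio01; apply: card_le_n. Qed.

Lemma cmpGG (al al' : set ((Gam -> X) * (Gam -> X))) : al `<=` al' ->
  forall k, Gseq R f x y al k <= Gseq R f x y al' k.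
Proof.
move=> sub k; apply: ratio_le => i /asboolP h; apply/asboolP; exact: sub.
Qed.

Lemma cmpFG t (al : set ((Gam -> X) * (Gam -> X))) :
  (forall a b, d a b < t -> al (a, b)) ->
  forall k, Fseq f d x y t k <= Gseq R f x y al k.
Proof.
move=> sub k; apply: ratio_le => i h; apply/asboolP; exact: sub.
Qed.

Lemma cmpGF t (al : set ((Gam -> X) * (Gam -> X))) :
  (forall a b, al (a, b) -> d a b < t) ->
  forall k, Gseq R f x y al k <= Fseq f d x y t k.
Proof.
move=> sub k; apply: ratio_le => i /asboolP h; exact: sub.
Qed.
End Main.

Theorem lemma3p1 (R : realType) (X : finType) (Gam : Type)
  (hX : (1 < #|X|)%N) (hGne : exists g : Gam, True) (hGc : countable [set: Gam])
  (d : (Gam -> X) -> (Gam -> X) -> R) (hd : compatible_metric d)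
  (f : (Gam -> X) -> (Gam -> X)) (x y : Gam -> X) :
  [/\ ((exists s : R, 0 < s /\ Fl f d x y s = 0) <->
         (exists al, unifF al /\ G R f x y al = 0)) /\
      ((exists al, unifF al /\ G R f x y al = 0) <->
         (exists D, finite_set D /\ G R f x y (gammaD (X:=X) D) = 0)),
      ((exists s : R, 0 < s /\ Fl f d x y s < 1) <->
         (exists al, unifF al /\ G R f x y al < 1)) /\
      ((exists al, unifF al /\ G R f x y al < 1) <->
         (exists D, finite_set D /\ G R f x y (gammaD (X:=X) D) < 1)) &
      ((forall s : R, 0 < s -> Fstar f d x y s = 1) <->
         (forall al, unifF al -> Gstar R f x y al = 1)) /\
      ((forall al, unifF al -> Gstar R f x y al = 1) <->
         (forall D, finite_set D -> Gstar R f x y (gammaD (X:=X) D) = 1))].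
Proof.
have /countable_injP [hg hinjin] := hGc.
have hinj : forall a b : Gam, hg a = hg b -> a = b.
  by move=> a b; apply: hinjin; apply: mem_set.
have U1 := @unifU1 R Gam X hg hinj d hd.
have U2 := @unifU2 R Gam X hg hinj d hd.
have uD : forall D : set Gam, finite_set D -> unifF (gammaD (X:=X) D).
  by move=> D fD; exists D; split.
have LGG : forall al al', al `<=` al' -> G R f x y al <= G R f x y al'.
  move=> al al' sub; apply: liminf_le; [exact: G01|exact: G01|exact: cmpGG].
have SGG : forall al al', al `<=` al' -> Gstar R f x y al <= Gstar R f x y al'.
  move=> al al' sub; apply: limsup_le; [exact: G01|exact: G01|exact: cmpGG].
have LFG : forall t al, (forall a b, d a b < t -> al (a, b)) -> Fl f d x y t <= G R f x y al.
  move=> t al sub; apply: liminf_le; [exact: F01|exact: G01|exact: cmpFG].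
have SFG : forall t al, (forall a b, d a b < t -> al (a, b)) -> Fstar f d x y t <= Gstar R f x y al.
  move=> t al sub; apply: limsup_le; [exact: F01|exact: G01|exact: cmpFG].
have LGF : forall t al, (forall a b, al (a, b) -> d a b < t) -> G R f x y al <= Fl f d x y t.
  move=> t al sub; apply: liminf_le; [exact: G01|exact: F01|exact: cmpGF].
have SGF : forall t al, (forall a b, al (a, b) -> d a b < t) -> Gstar R f x y al <= Fstar f d x y t.
  move=> t al sub; apply: limsup_le; [exact: G01|exact: F01|exact: cmpGF].
have G0 : forall al, 0 <= G R f x y al by move=> al; apply: liminf_ge0; exact: G01.
have F0 : forall t, 0 <= Fl f d x y t by move=> t; apply: liminf_ge0; exact: F01.
have G1 : forall al, Gstar R f x y al <= 1 by move=> al; apply: limsup_le1; exact: G01.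
have F1 : forall t, Fstar f d x y t <= 1 by move=> t; apply: limsup_le1; exact: F01.
split; [split|split|split].
- split.
  + move=> [s [s0 hF]]; have [D [fD hD]] := U1 s s0.
    exists (gammaD D); split; first exact: uD.
    apply/eqP; rewrite eq_le G0 andbT -hF; apply: LGF => a b; exact: hD.
  + move=> [al [[D [fD sub]] hG]]; have [e [e0 he]] := U2 D fD.
    exists e; split => //; apply/eqP; rewrite eq_le F0 andbT -hG.
    by apply: LFG => a b h; apply: sub; apply: he.
- split.
  + move=> [al [[D [fD sub]] hG]]; exists D; split => //.
    by apply/eqP; rewrite eq_le G0 andbT -hG; apply: LGG.
  + by move=> [D [fD hG]]; exists (gammaD D); split => //; apply: uD.
- split.
  + move=> [s [s0 hF]]; have [D [fD hD]] := U1 s s0.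
    exists (gammaD D); split; first exact: uD.
    apply: le_lt_trans hF; apply: LGF => a b; exact: hD.
  + move=> [al [[D [fD sub]] hG]]; have [e [e0 he]] := U2 D fD.
    exists e; split => //; apply: le_lt_trans hG.
    by apply: LFG => a b h; apply: sub; apply: he.
- split.
  + move=> [al [[D [fD sub]] hG]]; exists D; split => //.
    by apply: le_lt_trans hG; apply: LGG.
  + by move=> [D [fD hG]]; exists (gammaD D); split => //; apply: uD.
- split.
  + move=> h7 al [D [fD sub]]; have [e [e0 he]] := U2 D fD.
    apply/eqP; rewrite eq_le G1 /= -(h7 e e0).
    by apply: SFG => a b h; apply: sub; apply: he.
  + move=> h8 s s0; have [D [fD hD]] := U1 s s0.
    apply/eqP; rewrite eq_le F1 /= -(h8 (gammaD D) (uD D fD)).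
    apply: SGF => a b; exact: hD.
- split.
  + by move=> h8 D fD; apply: h8; apply: uD.
  + move=> h9 al [D [fD sub]].
    apply/eqP; rewrite eq_le G1 /= -(h9 D fD); exact: SGG.
Qed.
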